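(* Let $u_0\in H^1(S^1)$ and let $(\rho,\rho_t)$ be the global solution for $t\ge0$ (with $\int_0^1\rho(t,x)^2dx=1$ for all $t$) of the system $\frac{d\rho}{dt}=\rho_t$, $\frac{d\rho_t}{dt}=f(\rho,\rho_t)$, $\rho(0)=1$, $\rho_t(0)=\tfrac12u_0'$. For $t\ge0$ let $K(t,x)=\int_0^x\rho(t,y)^2dy+t\,u_0(0)-\int_0^t\int_0^\tau H(s,0)\,ds\,d\tau$ and $N(t)=\{x\in S^1: K_x(t,x)\text{ exists and equals }0\}$ (i.e. $\rho(t,x)=0$). Then for almost every $t\in\mathbb{R}_+$, $$\int_{N(t)}\rho_t(t,y)^2\,dy=0.$$
   Context: $S^1=\mathbb{R}/\mathbb{Z}$; functions on $S^1$ are $1$-periodic functions on $[0,1]$. Let $\mu=\int_0^1u_0\,dx$. For $\rho,\sigma\in L^2(S^1)$ define $$G(\rho,\sigma)(x)=\int_0^x 2\rho\sigma\,dy+\mu-\int_0^1\Big(\int_0^y 2\rho\sigma\,dz\Big)\rho(y)^2\,dy,$$ $$F(\rho,\sigma)(x)=\int_0^1\frac{\cosh\big(\big|\int_y^x\rho(z)^2dz\big|-\tfrac12\big)}{2\sinh(1/2)}\big(\rho(y)^2G(y)^2+2\sigma(y)^2\big)\,dy,\qquad f(\rho,\sigma)=\tfrac12\rho\,(G^2-F),$$ with $G=G(\rho,\sigma)$. Along the solution write $G(t,x)=G(\rho(t),\rho_t(t))(x)$ and $$H(t,x)=\int_0^x\frac{\sinh\big(\int_y^x\rho^2dz-\tfrac12\big)}{2\sinh(1/2)}(\rho^2G^2+2\rho_t^2)(y)\,dy+\int_x^1\frac{\sinh\big(-\int_y^x\rho^2dz-\tfrac12\big)}{2\sinh(1/2)}(\rho^2G^2+2\rho_t^2)(y)\,dy.$$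 *)

(* Defs.v *)
From mathcomp Require Import all_boot all_order all_algebra.
From mathcomp Require Import all_classical all_reals all_analysis.
Import Order.TTheory GRing.Theory Num.Theory.
Import numFieldNormedType.Exports.
Local Open Scope classical_set_scope.
Local Open Scope ring_scope.

Section Defs.
Context {R : realType}.
Local Notation mu := (@lebesgue_measure R).

Definition Int (a b : R) (g : R -> R) : R :=
  if a <= b then Rintegral mu `[a, b] g else - Rintegral mu `[b, a] g.

Definition coshR (x : R) : R := (expR x + expR (- x)) / 2.
Definition sinhR (x : R) : R := (expR x - expR (- x)) / 2.

(* G(rho,sigma)(x), with mu0 = \int_0^1 u0 *)
Definition Gop (mu0 : R) (r s : R -> R) (x : R) : R :=
  Int 0 x (fun y => 2 * r y * s y) + mu0
  - Int 0 1 (fun y => Int 0 y (fun z => 2 * r z * s z) * r y ^+ 2).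

Definition Fop (mu0 : R) (r s : R -> R) (x : R) : R :=
  Int 0 1 (fun y =>
    coshR (`|Int y x (fun z => r z ^+ 2)| - 2^-1) / (2 * sinhR 2^-1)
    * (r y ^+ 2 * Gop mu0 r s y ^+ 2 + 2 * s y ^+ 2)).

Definition fop (mu0 : R) (r s : R -> R) (x : R) : R :=
  2^-1 * r x * (Gop mu0 r s x ^+ 2 - Fop mu0 r s x).

Definition Hop (mu0 : R) (r s : R -> R) (x : R) : R :=
  Int 0 x (fun y =>
    sinhR (Int y x (fun z => r z ^+ 2) - 2^-1) / (2 * sinhR 2^-1)
    * (r y ^+ 2 * Gop mu0 r s y ^+ 2 + 2 * s y ^+ 2))
  + Int x 1 (fun y =>
    sinhR (- Int y x (fun z => r z ^+ 2) - 2^-1) / (2 * sinhR 2^-1)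
    * (r y ^+ 2 * Gop mu0 r s y ^+ 2 + 2 * s y ^+ 2)).

Definition Kfun (mu0 u00 : R) (rho rhot : R -> R -> R) (t x : R) : R :=
  Int 0 x (fun y => rho t y ^+ 2) + t * u00
  - Int 0 t (fun tau => Int 0 tau (fun s => Hop mu0 (rho s) (rhot s) 0)).

Definition Nset (mu0 u00 : R) (rho rhot : R -> R -> R) (t : R) : set R :=
  [set x | (0 <= x < 1) /\ derivable (Kfun mu0 u00 rho rhot t) x 1
           /\ derive1 (Kfun mu0 u00 rho rhot t) x = 0].

(* membership in L^2(S^1) (via the fundamental domain [0,1]) *)
Definition L2on (g : R -> R) : Prop :=
  measurable_fun `[(0:R), 1] g /\ mu.-integrable `[0, 1] (fun x => (g x ^+ 2)%:E).

Definition L2norm (g : R -> R) : R :=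
  Num.sqrt (Rintegral mu `[0, 1] (fun x => g x ^+ 2)).

(* the curve t |-> u t in L^2(S^1) has derivative du t at time t >= 0
   (one-sided at t = 0) *)
Definition L2_deriv_at (u du : R -> R -> R) (t : R) : Prop :=
  forall eps : R, 0 < eps -> exists2 d : R, 0 < d &
    forall h : R, h != 0 -> `|h| < d -> 0 <= t + h ->
      L2norm (fun x => (u (t + h) x - u t x) / h - du t x) <= eps.

End Defs.

(* Main.v *)
Require Import Defs.
From mathcomp Require Import all_boot all_order all_algebra.
From mathcomp Require Import all_classical all_reals all_analysis.
From mathcomp Require Import ring lra measurable_realfun.
Import Order.TTheory GRing.Theory Num.Theory.
Import numFieldNormedType.Exports.
Local Open Scope classical_set_scope.
Local Open Scope ring_scope.

Section Kink.
Context {R : realType}.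
Local Notation mu := (@lebesgue_measure R).

Definition kinkset (m : R -> R) : set R :=
  [set t | exists c d e : R, [/\ 0 < d, 0 < e &
     forall h, h != 0 -> `|h| < e -> m t + h * c + `|h| * d <= m (t + h)]].

Definition Sq (m : R -> R) (q : rat * rat * rat) : set R :=
  [set t | ratr q.1.2 < t < ratr q.2 /\
     forall y, ratr q.1.2 < y < ratr q.2 -> y != t ->
       m t + ratr q.1.1 * (y - t) < m y].

Lemma Sq_sub1 {m q t1 t2} : Sq m q t1 -> Sq m q t2 -> t1 = t2.
Proof.
move=> [i1 H1] [i2 H2]; apply/eqP/negPn/negP => ne.
have := H1 _ i2; rewrite eq_sym => /(_ ne) h1.
have := H2 _ i1 => /(_ ne) h2.
lra.
Qed.

Lemma Sq_negl m q : mu.-negligible (Sq m q).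
Proof.
case: (pselect (exists t, Sq m q t)) => [[t St]|nS]; last first.
  apply: (negligibleS _ (negligible_set0 mu)) => t St; apply: nS; by exists t.
apply: (@negligibleS _ _ _ mu [set t]).
  by move=> y Sy; rewrite /= (Sq_sub1 Sy St).
exists [set t]; split => //; exact: lebesgue_measure_set1.
Qed.

Lemma kinkset_negl m : mu.-negligible (kinkset m).
Proof.
pose F (n : nat) : set R :=
  if unpickle n is Some q then Sq m q else set0.
apply: (@negligibleS _ _ _ mu (\bigcup_n F n)); last first.
  apply: negligible_bigcup => n; rewrite /F; case: (unpickle n) => [q|].
    exact: Sq_negl.
  exact: negligible_set0.
move=> t [c [d [e [d0 e0 H]]]].
have [r /[!in_itv]/=/andP[r1 r2]] : exists r : rat, ratr r \in `](c - d), (c + d)[.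
  by apply: rat_in_itvoo; lra.
have [a /[!in_itv]/=/andP[a1 a2]] : exists r : rat, ratr r \in `](t - e), t[.
  by apply: rat_in_itvoo; lra.
have [b /[!in_itv]/=/andP[b1 b2]] : exists r : rat, ratr r \in `]t, (t + e)[.
  by apply: rat_in_itvoo; lra.
exists (pickle (r, a, b)); first by [].
rewrite /F pickleK /Sq /=; split; first by apply/andP.
move=> y /andP[ya yb] yt.
have := H (y - t); rewrite subr_eq0 => /(_ yt).
have hlt : `|y - t| < e by rewrite ltr_norml; apply/andP; split; lra.
move=> /(_ hlt); rewrite [t + _]addrC subrK => Hy.
apply: lt_le_trans Hy.
have [yt0|yt0] := ltP 0 (y - t).
  rewrite gtr0_norm //.
  have : 0 < (y - t) * (c + d - ratr r) by apply: mulr_gt0 => //; lra.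
  lra.
have yt1 : y - t < 0 by rewrite lt_neqAle yt0 andbT subr_eq0.
rewrite ltr0_norm //.
have : 0 < (y - t) * (c - d - ratr r) by rewrite nmulr_rgt0 //; lra.
lra.
Qed.
End Kink.

Section L2.
Context {R : realType}.
Local Notation mu := (@lebesgue_measure R).
Local Notation I01 := ([set` `[(0:R), 1]] : set R).

Lemma mI01 : measurable (I01 : set (measurableTypeR R)).
Proof. exact: measurable_itv. Qed.

Lemma mu01 : mu I01 = 1%E.
Proof. by rewrite lebesgue_measure_itv /= lte_fin ltr01 -EFinD subr0. Qed.

Lemma int_cst01 (k : R) : mu.-integrable I01 (EFin \o cst k).
Proof.
apply/integrableP; split; first exact/measurable_EFinP/measurable_cst.
rewrite (eq_integral (cst `|k|%:E)); last by move=> x _.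
rewrite integral_cst //=.
by rewrite mu01 mule1 ltry.
Qed.

Lemma norm_le_sqr1 (x : R) : `|x| <= x ^+ 2 + 1.
Proof.
rewrite -real_normK ?num_real //; have := normr_ge0 x; set y := `|x|.
move=> y0; have : 0 <= (y - 1) ^+ 2 by apply: sqr_ge0.
rewrite expr2 !expr2; nra.
Qed.

Lemma L2_meas g : L2on g -> measurable_fun I01 g.
Proof. by case. Qed.

Lemma L2_int g : L2on g -> mu.-integrable I01 (EFin \o g).
Proof.
move=> [mg ig].
apply: (@le_integrable _ _ _ mu I01 mI01 _ ((fun x => (g x ^+ 2)%:E) \+ (EFin \o cst 1))).
- exact/measurable_EFinP.
- move=> x _ /=.
  rewrite lee_fin.
  rewrite (ger0_norm (x := g x ^+ 2 + 1)); first exact: norm_le_sqr1.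
  by rewrite addr_ge0 ?sqr_ge0.
- apply: integrableD => //; exact: int_cst01.
Qed.


Lemma L2D (f g : R -> R) : L2on f -> L2on g -> L2on (fun x => f x + g x).
Proof.
move=> [mf f2] [mg g2]; split; first exact: measurable_funD.
eapply (@le_integrable _ _ _ mu I01 mI01); last first.
  exact: (integrableD mI01 (integrableZl mI01 2 f2) (integrableZl mI01 2 g2)).
- move=> x _.
  change (`|((f x + g x) ^+ 2)%:E| <= `|((2 * f x ^+ 2) + (2 * g x ^+ 2))%:E|)%E.
  rewrite !abse_EFin lee_fin.
  rewrite (ger0_norm (sqr_ge0 _)) ger0_norm; last first.
    by rewrite addr_ge0 // mulr_ge0 // sqr_ge0.
  have := sqr_ge0 (f x - g x); rewrite !expr2; lra.
- have h1 : measurable_fun I01 (fun x => (f x + g x) ^+ 2).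
    by apply: measurable_funX; exact: measurable_funD.
  exact ((measurable_EFinP _ _).2 h1).
Qed.

Lemma L2Z (k : R) (f : R -> R) : L2on f -> L2on (fun x => k * f x).
Proof.
move=> [mf f2]; split; first by apply: measurable_funM => //; exact: measurable_cst.
eapply (@eq_integrable _ _ _ mu I01 mI01); last exact: (integrableZl mI01 (k ^+ 2) f2).
by move=> x _ /=; rewrite -EFinM exprMn.
Qed.

Lemma L2_ext (f g : R -> R) : (forall x, f x = g x) -> L2on f -> L2on g.
Proof. by move=> fg; have -> : g = f by apply/funext => x; rewrite fg. Qed.

End L2.

Lemma ge0_le_integral_any d (T : measurableType d) (R : realType)
  (mu : {measure set T -> \bar R}) (N D : set T) (f g : T -> \bar R) :
  (forall x, (0 <= f x)%E) -> (forall x, D x -> (0 <= g x)%E) ->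
  (forall x, N x -> D x /\ (f x <= g x)%E) ->
  (\int[mu]_(x in N) f x <= \int[mu]_(x in D) g x)%E.
Proof.
move=> f0 g0 fg.
rewrite (ge0_integralE mu (fun x (_ : N x) => f0 x)) (ge0_integralE mu g0) /=.
apply: le_ereal_sup => _ [h /= hf <-]; exists h => //= x.
apply: (le_trans (hf x)); rewrite !patchE.
case: ifPn => [/set_mem Nx|_]; first by have [Dx fxg] := fg _ Nx; rewrite mem_set.
by case: ifPn => // /set_mem Dx; exact: g0.
Qed.

Section Nset.
Context {R : realType}.
Local Notation mu := (@lebesgue_measure R).
Local Notation I01 := ([set` `[(0:R), 1]] : set R).

Lemma Nset_negl (mu0 u00 : R) (rho rhot : R -> R -> R) (t : R) :
  L2on (rho t) ->
  mu.-negligible [set x | Nset mu0 u00 rho rhot t x /\ rho t x != 0].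
Proof.
move=> [mr ir].
pose g y := rho t y ^+ 2.
pose h := g \_ I01.
have intT : mu.-integrable setT (EFin \o h).
  rewrite /h -restrict_EFin; apply/integrable_restrict => //=.
  by rewrite setTI.
have loc : locally_integrable setT h by apply: open_integrable_locally => //; exact: openT.
have [E0 [mE0 E00 sE0]] := lebesgue_differentiation loc.
apply: (@negligibleS _ _ _ mu (E0 `|` [set 0])); last first.
  apply: negligibleU; first by exists E0; split.
  exists [set 0]; split; [exact: measurable_set1|exact: lebesgue_measure_set1|by []].
move=> x [[/andP[x0 x1] [dK DK]] rx].
have [->|xn0] := eqVneq x 0; first by right.
have {x0 xn0}x0 : 0 < x by rewrite lt_neqAle eq_sym xn0 x0.
left; apply: sE0 => lp.
have int01 : mu.-integrable [set` Interval (BLeft 0) (BRight 1)] (EFin \o h).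
  by apply: integrableS intT => //.
have [|dF DF] := FTC1_lebesgue_pt x1 int01 _ lp.
  first [ by rewrite ltBSide /= (ltW x0) | by rewrite /= (ltW x0) | by move=> /=; rewrite lteBSide /= (ltW x0) | by case: (ltW x0) ].
set F := (fun y => _) in dF DF.
pose C := t * u00 - Int 0 t (fun tau => Int 0 tau (fun s => Hop mu0 (rho s) (rhot s) 0)).
have KF : \forall y \near x, F y + C = Kfun mu0 u00 rho rhot t y.
  have xI : x \in `]0, 1[ by rewrite in_itv /= x0 x1.
  near=> y.
  have : y \in `]0, 1[ by near: y; exact: near_in_itvoo.
  rewrite in_itv /= => /andP[y0 y1].
  rewrite /Kfun /Int (ltW y0) /C addrA; congr (_ + _ - _).
  apply: eq_Rintegral => z /[!inE] /= /[!in_itv] /= /andP[z0 zy].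
  by rewrite /h patchE mem_set //= in_itv /= z0 (le_trans zy (ltW y1)).
have dF' : is_derive x 1 F (h x) by apply: DeriveDef => //; rewrite -derive1E.
have dFC := @is_deriveD _ _ _ F (cst C) x 1 (h x) 0 dF' (is_derive_cst C x 1).
have dK' := @near_eq_is_derive _ _ _ (F + cst C) (Kfun mu0 u00 rho rhot t) x 1 _ KF dFC.
move: DK; rewrite derive1E derive_val addr0 /h patchE mem_set /=; last first.
  by rewrite in_itv /= (ltW x0) (ltW x1).
by move=> /eqP; rewrite /g sqrf_eq0 (negbTE rx).
Unshelve. all: by end_near.
Qed.

End Nset.

Section KinkStep.
Context {R : realType}.
Local Notation mu := (@lebesgue_measure R).
Local Notation I01 := ([set` `[(0:R), 1]] : set R).
Local Notation I f := (Rintegral mu I01 f).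

Lemma kink_pt (a b h : R) :
  `|a| + h * (Num.sg a * b) + `|h| * ((1 - Num.sg a ^+ 2) * `|b|) <= `|a + h * b|.
Proof.
have [->|a0] := eqVneq a 0.
  by rewrite sgr0 normr0 !mul0r expr0n /= subr0 mul1r mulr0 !add0r normrM.
rewrite sqr_sg a0 /= subrr mul0r mulr0 addr0 normrEsg.
have -> : Num.sg a * a + h * (Num.sg a * b) = Num.sg a * (a + h * b) by ring.
apply: le_trans (ler_norm _) _.
by rewrite normrM normr_sg a0 mul1r.
Qed.

Lemma sg_homo : {homo (@Num.sg R) : x y / x <= y}.
Proof.
move=> x y xy.
have [x0|x0|x0] := ltrgt0P x.
- have y0 : 0 < y by lra.
  by rewrite (gtr0_sg x0) (gtr0_sg y0).
- rewrite (ltr0_sg x0); have [y0|y0|y0] := ltrgt0P y.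
  + by rewrite (gtr0_sg y0); lra.
  + by rewrite (ltr0_sg y0).
  + by rewrite y0 sgr0; lra.
- rewrite x0 sgr0; have y0 : 0 <= y by lra.
  have [y1|y1] := eqVneq y 0; first by rewrite y1 sgr0.
  have y2 : 0 < y by rewrite lt_neqAle eq_sym y1 y0.
  by rewrite (gtr0_sg y2); lra.
Qed.

Lemma sg_meas (D : set R) : measurable D -> measurable_fun D (@Num.sg R).
Proof. by move=> mD; apply: nondecreasing_measurable => //; exact: sg_homo. Qed.


Lemma intD' (f g : R -> R) : mu.-integrable I01 (EFin \o f) -> mu.-integrable I01 (EFin \o g) ->
  mu.-integrable I01 (EFin \o (fun x => f x + g x)).
Proof.
move=> If Ig; have := integrableD mI01 If Ig.
by apply: eq_integrable => // x _ /=; rewrite EFinD.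
Qed.

Lemma intZ' (k : R) (f : R -> R) : mu.-integrable I01 (EFin \o f) ->
  mu.-integrable I01 (EFin \o (fun x => k * f x)).
Proof.
move=> If; have := integrableZl mI01 k If.
by apply: eq_integrable => // x _ /=; rewrite EFinM.
Qed.

Lemma int_bnd (f g : R -> R) : measurable_fun I01 f -> L2on g ->
  (forall x, `|f x| <= `|g x|) -> mu.-integrable I01 (EFin \o f).
Proof.
move=> mf Lg fg.
eapply (@le_integrable _ _ _ mu I01 mI01); last exact (L2_int _ Lg).
- exact ((measurable_EFinP _ _).2 mf).
- by move=> x _ /=; rewrite lee_fin.
Qed.

Lemma int_abs (f : R -> R) : L2on f -> mu.-integrable I01 (EFin \o (fun x => `|f x|)).
Proof. by move=> Lf; exact (integrable_norm (L2_int _ Lf)). Qed.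


Lemma arith1 (eta S : R) : 0 < eta -> S <= eta ^+ 2 -> (2 * eta)^-1 * S + eta / 2 <= eta.
Proof.
move=> e0 Se.
have : (2 * eta)^-1 * S <= (2 * eta)^-1 * eta ^+ 2.
  by apply: ler_wpM2l => //; rewrite invr_ge0; lra.
have -> : (2 * eta)^-1 * eta ^+ 2 = eta / 2 by field; lra.
lra.
Qed.

Lemma kink_step (r0 r1 v : R -> R) (h eta : R) :
  L2on r0 -> L2on r1 -> L2on v -> h != 0 -> 0 < eta ->
  L2norm (fun x => (r1 x - r0 x) / h - v x) <= eta ->
  I (fun x => `|r0 x|) + h * I (fun x => Num.sg (r0 x) * v x)
    + `|h| * I (fun x => (1 - Num.sg (r0 x) ^+ 2) * `|v x|)
  <= I (fun x => `|r1 x|) + `|h| * eta.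
Proof.
move=> L0 L1 Lv h0 eta0 Hn.
pose e x := (r1 x - r0 x) / h - v x.
have Le : L2on e.
  apply: (L2_ext (fun x => (h^-1 * r1 x + (- h^-1) * r0 x) + (-1) * v x)).
    by move=> x; rewrite /e; ring.
  by apply: L2D; [apply: L2D|]; apply: L2Z.
have mr0 := L2_meas _ L0; have mv := L2_meas _ Lv.
have msg : measurable_fun I01 (fun x => Num.sg (r0 x)).
  exact: (measurableT_comp (sg_meas _ measurableT) mr0).
have isv : mu.-integrable I01 (EFin \o (fun x => Num.sg (r0 x) * v x)).
  apply: (int_bnd _ _ _ Lv) => [|x]; first exact: measurable_funM.
  rewrite normrM; apply: ler_piMl => //.
  by rewrite normr_sg; case: (r0 x != 0).
have iw : mu.-integrable I01 (EFin \o (fun x => (1 - Num.sg (r0 x) ^+ 2) * `|v x|)).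
  apply: (int_bnd _ _ _ Lv) => [|x].
    have mav : measurable_fun I01 (fun x => `|v x|).
      exact: (measurableT_comp (@normr_measurable R setT) mv).
    apply: measurable_funM; last exact: mav.
    apply: measurable_funB; first exact: measurable_cst.
    exact: measurable_funX.
  rewrite normrM normr_id; apply: ler_piMl => //.
  by rewrite sqr_sg; case: (r0 x != 0); rewrite /= ?subrr ?normr0 ?subr0 ?normr1.
have i0 := int_abs _ L0; have i1 := int_abs _ L1; have ie := int_abs _ Le.
have step1 : I (fun x => `|r0 x| + h * (Num.sg (r0 x) * v x)
                 + `|h| * ((1 - Num.sg (r0 x) ^+ 2) * `|v x|))
           <= I (fun x => `|r1 x| + `|h| * `|e x|).
  apply: le_Rintegral => //.
  - by apply: intD'; [apply: intD' => //|]; apply: intZ'.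
  - by apply: intD' => //; apply: intZ'.
  move=> x _; apply: le_trans (kink_pt _ _ _) _.
  have -> : r0 x + h * v x = r1 x - h * e x by rewrite /e; field.
  by rewrite -normrM; exact: ler_normB.
rewrite RintegralD //in step1; last 2 first.
  by apply: intD' => //; apply: intZ'.
  by apply: intZ'.
rewrite RintegralD //in step1; last by apply: intZ'.
rewrite RintegralD //in step1; last by apply: intZ'.
rewrite !RintegralZl // in step1.
have ieta : I (fun x => `|e x|) <= eta.
  have S0 : 0 <= I (fun x => e x ^+ 2) by apply: Rintegral_ge0 => x _; exact: sqr_ge0.
  have Sle : I (fun x => e x ^+ 2) <= eta ^+ 2.
    have Hn' : Num.sqrt (I (fun x => e x ^+ 2)) <= eta := Hn.
    move: S0 Hn'; set S := I _ => S0 Hn'.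
    have qS := sqr_sqrtr S0; have q0 := sqrtr_ge0 S.
    move: Hn' qS q0; set q := Num.sqrt S => Hn' qS q0.
    rewrite -qS; have : 0 <= (eta - q) * (eta + q) by apply: mulr_ge0; lra.
    rewrite !expr2; nra.
  have ie2 : mu.-integrable I01 (EFin \o (fun x => e x ^+ 2)) by case: Le.
  have ic := int_cst01 (eta / 2).
  have pt : forall x, I01 x -> `|e x| <= (2 * eta)^-1 * e x ^+ 2 + eta / 2.
    move=> x _; rewrite -real_normK ?num_real //.
    have : 0 <= (2 * eta)^-1 * (`|e x| - eta) ^+ 2.
      by apply: mulr_ge0; [rewrite invr_ge0; lra|exact: sqr_ge0].
    have -> : (2 * eta)^-1 * (`|e x| - eta) ^+ 2 =
              (2 * eta)^-1 * `|e x| ^+ 2 + eta / 2 - `|e x|.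
      by field; lra.
    lra.
  have step2 : I (fun x => `|e x|) <= I (fun x => (2 * eta)^-1 * e x ^+ 2 + eta / 2).
    apply: le_Rintegral => //.
    by apply: intD' => //; apply: intZ'.
  apply: (le_trans step2).
  rewrite RintegralD //; last by apply: intZ'.
  rewrite Rintegral_cst //.
  have m1 : fine (mu `[0, 1]%classic) = 1 by rewrite mu01.
  rewrite m1 mulr1 (RintegralZl _ mI01 ie2).
  exact: arith1.
apply: (le_trans step1); rewrite lerD2l; apply: ler_wpM2l => //.
Qed.

End KinkStep.

Section Zero.
Context {R : realType}.
Local Notation mu := (@lebesgue_measure R).
Local Notation I01 := ([set` `[(0:R), 1]] : set R).
Local Notation I f := (Rintegral mu I01 f).

Lemma meas_w (r0 v : R -> R) : L2on r0 -> L2on v ->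
  measurable_fun I01 (fun x => (1 - Num.sg (r0 x) ^+ 2) * `|v x|).
Proof.
move=> L0 Lv; have mr0 := L2_meas _ L0; have mv := L2_meas _ Lv.
have msg : measurable_fun I01 (fun x => Num.sg (r0 x)).
  exact: (measurableT_comp (sg_meas _ measurableT) mr0).
have mav : measurable_fun I01 (fun x => `|v x|).
  exact: (measurableT_comp (@normr_measurable R setT) mv).
apply: measurable_funM; last exact: mav.
apply: measurable_funB; first exact: measurable_cst.
exact: measurable_funX.
Qed.

Lemma w_ge0 (a b : R) : 0 <= (1 - Num.sg a ^+ 2) * `|b|.
Proof. by rewrite sqr_sg; case: (a != 0); rewrite /= ?subrr ?mul0r // subr0 mul1r. Qed.

Lemma int_w (r0 v : R -> R) : L2on r0 -> L2on v ->
  mu.-integrable I01 (EFin \o (fun x => (1 - Num.sg (r0 x) ^+ 2) * `|v x|)).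
Proof.
move=> L0 Lv; apply: (int_bnd _ _ (meas_w _ _ L0 Lv) Lv) => x.
rewrite normrM normr_id; apply: ler_piMl => //.
by rewrite sqr_sg; case: (r0 x != 0); rewrite /= ?subrr ?normr0 ?subr0 ?normr1.
Qed.

Lemma zero_case (mu0 u00 : R) (rho rhot : R -> R -> R) (t : R) :
  L2on (rho t) -> L2on (rhot t) ->
  I (fun x => (1 - Num.sg (rho t x) ^+ 2) * `|rhot t x|) = 0 ->
  (\int[mu]_(y in Nset mu0 u00 rho rhot t) ((rhot t y ^+ 2)%:E))%E = 0%E.
Proof.
move=> L0 Lv dd0.
set w := fun x => (1 - Num.sg (rho t x) ^+ 2) * `|rhot t x|.
have [A [mA A0 sA]] := Nset_negl mu0 u00 rho rhot t L0.
have iw : mu.-integrable I01 (EFin \o w) := int_w _ _ L0 Lv.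
have mw : measurable_fun I01 w := meas_w _ _ L0 Lv.
have w0 : forall x, 0 <= w x by move=> x; exact: w_ge0.
have mv := L2_meas _ Lv.
have mav : measurable_fun I01 (fun x => `|rhot t x|).
  exact: (measurableT_comp (@normr_measurable R setT) mv).
have Iw0 : (\int[mu]_(x in I01) (w x)%:E = 0)%E.
  have fin := integrable_fin_num mI01 iw.
  by rewrite -(fineK fin); congr (_%:E); exact: dd0.
have aew : ae_eq mu I01 (EFin \o w) (cst 0%E).
  have mEw : measurable_fun I01 (EFin \o w) := (measurable_EFinP _ _).2 mw.
  apply (proj1 (ae_eq_integral_abs mu mI01 mEw)).
  rewrite -Iw0; apply: eq_integral => x _ /=.
  by rewrite ger0_norm.
pose g x := w x * `|rhot t x| + \1_A x * rhot t x ^+ 2.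
have mg : measurable_fun I01 g.
  apply: measurable_funD; first exact: measurable_funM.
  apply: measurable_funM; last exact: measurable_funX.
  exact: measurable_indic.
apply/eqP; rewrite eq_le; apply/andP; split; last first.
  by apply: integral_ge0 => x _; rewrite lee_fin sqr_ge0.
apply: (@le_trans _ _ (\int[mu]_(x in I01) (g x)%:E)%E).
  apply: ge0_le_integral_any.
  - by move=> x; rewrite lee_fin sqr_ge0.
  - move=> x _; rewrite lee_fin; apply: addr_ge0; first by rewrite mulr_ge0.
    by rewrite mulr_ge0 ?sqr_ge0 // indicE; case: (x \in A).
  move=> x Nx; split.
    by case: Nx => /andP[x0 x1] _; rewrite /= in_itv /= x0 (ltW x1).
  rewrite lee_fin /g indicE.
  case: (pselect (A x)) => Ax.
    rewrite mem_set // mul1r lerDr mulr_ge0 //.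
  rewrite memNset // mul0r addr0.
  have rx : rho t x = 0.
    by apply/eqP; apply: contrapT => /negP rx; apply: Ax; apply: sA.
  rewrite /w rx sgr0 expr0n /= subr0 mul1r -normrM ger0_norm ?expr2 //.
  by rewrite -expr2 sqr_ge0.
rewrite (ae_eq_integral (cst 0%E)) //; first by rewrite integral0.
- exact ((measurable_EFinP _ _).2 mg).
have nA : mu.-negligible A by exists A; split.
have nU := negligibleU aew nA.
apply: (@negligibleS _ _ _ mu _ _ _ nU).
move=> x /= /not_implyP [Dx gx]; case: (pselect (A x)) => Ax; first by right.
left => /(_ Dx) /= wx; apply: gx; congr (_%:E).
rewrite /g indicE memNset // mul0r addr0.
by move: wx => [->]; rewrite mul0r.
Qed.

End Zero.

Lemma arith2 {R : realType} (A B C h dd : R) :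
  A + h * C + `|h| * dd <= B + `|h| * (dd / 2) -> A + h * C + `|h| * (dd / 2) <= B.
Proof.
move=> H; have E : `|h| * dd = `|h| * (dd / 2) + `|h| * (dd / 2).
  by rewrite -mulrDr -splitr.
lra.
Qed.

Theorem lemma8 (R : realType) (u0 du0 : R -> R) (rho rhot : R -> R -> R) :
  (* u0 in H^1(S^1), with weak derivative du0 in L^2 *)
  (forall x, u0 (x + 1) = u0 x) ->
  L2on du0 ->
  (forall x, x \in `[0, 1] -> u0 x = u0 0 + Int 0 x du0) ->
  (* (rho, rho_t) : [0,oo) -> L^2(S^1) x L^2(S^1) *)
  (forall t x, 0 <= t -> rho t (x + 1) = rho t x /\ rhot t (x + 1) = rhot t x) ->
  (forall t, 0 <= t -> L2on (rho t) /\ L2on (rhot t)) ->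
  (* the ODE system, for all t >= 0 *)
  (forall t, 0 <= t -> L2_deriv_at rho rhot t) ->
  (forall t, 0 <= t ->
     L2_deriv_at rhot (fun s => fop (Int 0 1 u0) (rho s) (rhot s)) t) ->
  (* initial data *)
  {ae (@lebesgue_measure R), forall x, x \in `[0, 1] -> rho 0 x = 1} ->
  {ae (@lebesgue_measure R), forall x, x \in `[0, 1] -> rhot 0 x = 2^-1 * du0 x} ->
  (* conservation of the L^2 norm *)
  (forall t, 0 <= t -> Int 0 1 (fun x => rho t x ^+ 2) = 1) ->
  {ae (@lebesgue_measure R), forall t : R, (0 <= t)%R ->
     (\int[@lebesgue_measure R]_(y in Nset (Int 0%R 1%R u0) (u0 0%R) rho rhot t)
        ((rhot t y ^+ 2)%R%:E))%E = 0%E}.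
Proof.
move=> _ _ _ _ L2all Drho _ _ _ _.
pose m s := Rintegral (@lebesgue_measure R) ([set` `[(0:R), 1]] : set R)
              (fun x => `|rho s x|).
apply: (@negligibleS _ _ _ (@lebesgue_measure R) ([set 0] `|` kinkset m)); last first.
  apply: negligibleU; last exact: kinkset_negl.
  exists [set 0]; split; [exact: measurable_set1|exact: lebesgue_measure_set1|by []].
move=> t /= /not_implyP [t0 nz].
have [->|tn0] := eqVneq t 0; first by left.
right.
have tpos : 0 < t by rewrite lt_neqAle eq_sym tn0 t0.
have [L0 Lv] := L2all t t0.
set dd := Rintegral (@lebesgue_measure R) ([set` `[(0:R), 1]] : set R)
            (fun x => (1 - Num.sg (rho t x) ^+ 2) * `|rhot t x|).
have dd0 : 0 <= dd by apply: Rintegral_ge0 => x _; exact: w_ge0.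
have ddpos : 0 < dd.
  rewrite lt_neqAle dd0 andbT eq_sym; apply/eqP => dz; apply: nz.
  exact: (zero_case _ _ _ _ _ L0 Lv dz).
have dd2 : 0 < dd / 2 by rewrite divr_gt0.
have [del del0 Hd] := Drho t t0 (dd / 2) dd2.
exists (Rintegral (@lebesgue_measure R) ([set` `[(0:R), 1]] : set R)
          (fun x => Num.sg (rho t x) * rhot t x)), (dd / 2), (Num.min del t).
split => //; first by rewrite lt_min del0 tpos.
move=> h hn0 hlt.
have [hd ht] : `|h| < del /\ `|h| < t by move: hlt; rewrite lt_min => /andP[].
have th : 0 <= t + h.
  have : - h <= `|h| by rewrite -normrN ler_norm.
  lra.
have L1 := (L2all (t + h) th).1.
have Hn := Hd h hn0 hd th.
have K := kink_step _ _ _ _ _ L0 L1 Lv hn0 dd2 Hn.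
rewrite /m; exact: arith2 K.
Qed.
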